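(* For each $j\geq1$ there is a unique element $\Phi_j$ of the left ideal $Ay$ that is homogeneous of degree $j(N-1)$ and satisfies $\Phi_jx-x\Phi_j=x^Ny^{j-1}$. It is given by \[ \Phi_j=\frac1j\sum_{i=0}^{j-1}\binom{j}{i}c_i(N-1)\,x^{i(N-1)}y^{j-i}, \] and in particular $\Phi_1=y$ and, for $j\ge2$, $\Phi_j\equiv\frac1jy^j-\frac N2x^{N-1}y^{j-1}\pmod{F_{j-2}}$.
   Context: Let $\Bbbk$ be a field of characteristic zero and $N\geq1$ an integer. Let $A=A_N$ be the $\Bbbk$-algebra generated by $x,y$ subject to the relation $yx-xy=x^N$, graded with $x$ in degree $1$ and $y$ in degree $N-1$. For $k\ge-1$, $F_k$ is the span of the monomials $x^iy^j$ with $i\ge0$, $j\le k$. The polynomials $c_i(q)\in\mathbb Q[q]$ are defined recursively by $\sum_{i=0}^{j}\frac{(1)_{q,j+1-i}}{(j+1-i)!}\frac{c_i(q)}{i!}=\delta_{j,0}$ for all $j\ge0$, where $(a)_{k,i}=a(a+k)\cdots(a+(i-1)k)$; $c_i(N-1)$ denotes evaluation at $q=N-1$. *)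

(* Defs.v *)
From HB Require Import structures.
From mathcomp Require Import all_boot all_order all_algebra.
Set Implicit Arguments. Unset Strict Implicit. Unset Printing Implicit Defensive.
Import Order.TTheory GRing.Theory Num.Theory.
Local Open Scope ring_scope.

(* The algebra A_N = k<x,y>/(yx - xy = x^N) is modelled by its PBW normal
   form: an element sum_{i,j} a_{ij} x^i y^j is represented by the
   polynomial P : {poly {poly K}} whose j-th coefficient (a polynomial in x)
   is sum_i a_{ij} x^i, i.e. the outer variable is y and the inner one is x.
   NOTE: the ring structure of {poly {poly K}} is the COMMUTATIVE one and is
   only used to build normal forms; the product of A_N is [Amul] below. *)

Section Alg.
Variable K : fieldType.
Variable N : nat.

Definition PBW := {poly {poly K}}.

Definition mono (a b : nat) : PBW := ('X^a)%:P * 'X^b.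
Definition sc (c : K) (p : PBW) : PBW := (c%:P)%:P * p.

Definition ax : PBW := mono 1 0.
Definition ay : PBW := mono 0 1.

(* left multiplication by y on normal forms, using
   y q(x) = q(x) y + x^N q'(x)  (consequence of yx - xy = x^N). *)
Definition Ly (p : PBW) : PBW :=
  p * 'X + map_poly (fun q : {poly K} => 'X^N * q^`()) p.

(* product in A_N:  (sum_j p_j(x) y^j) * q = sum_j p_j(x) (y^j q) *)
Definition Amul (p q : PBW) : PBW :=
  \sum_(j < size p) (p`_j)%:P * iter j Ly q.

Definition inAy (p : PBW) : Prop := exists a : PBW, p = Amul a ay.

Definition homog (d : nat) (p : PBW) : Prop :=
  forall i j : nat, (p`_j)`_i != 0 -> (i + j * (N - 1))%N = d.

(* membership in F_k = span{x^i y^j : j <= k}, for k >= -1 *)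
Definition inF (k : int) (p : PBW) : Prop := ((size p)%:Z <= k + 1)%R.

End Alg.

Definition poch1 (i : nat) : {poly rat} := \prod_(m < i) (1 + m%:R *: 'X).

(* The polynomials c_i(q): the recursion
     sum_{i=0}^{j} (1)_{q,j+1-i}/(j+1-i)! * c_i/i! = delta_{j,0}
   solved for c_j (the i = j term is c_j / j!). *)
Definition cnext (s : seq {poly rat}) : {poly rat} :=
  let j := size s in
  (j`!)%:R *: ((j == 0%N)%:R
     - \sum_(i < j) (((j.+1 - i)`!)%:R^-1 * (i`!)%:R^-1) *: (poch1 (j.+1 - i) * s`_i)).

Fixpoint cseq (n : nat) : seq {poly rat} :=
  if n is n'.+1 then rcons (cseq n') (cnext (cseq n')) else [::].

Definition cpoly (i : nat) : {poly rat} := nth 0 (cseq i.+1) i.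

Definition cval (K : fieldType) (N i : nat) : K :=
  (map_poly (ratr : rat -> K) (cpoly i)).[(N - 1)%:R].

Definition Phi (K : fieldType) (N j : nat) : PBW K :=
  sc (j%:R^-1) (\sum_(i < j) sc ('C(j, i)%:R * cval K N i) (mono K (i * (N - 1)) (j - i))).

(* Main.v *)
Require Import Defs.
From HB Require Import structures.
From mathcomp Require Import all_boot all_order all_algebra.
From mathcomp Require Import zify ring.
Set Implicit Arguments. Unset Strict Implicit. Unset Printing Implicit Defensive.
Import Order.TTheory GRing.Theory Num.Theory.
Local Open Scope ring_scope.

Section W.
Variable K : fieldType.
Variable N : nat.
Hypothesis HK : [pchar K] =i pred0.

Lemma natK_eq0 n : ((n%:R : K) == 0) = (n == 0%N).
Proof. by move/pcharf0P: HK; apply. Qed.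

Lemma nz_den (x : rat) : (denq x)%:~R != 0 :> K.
Proof.
have := denq_gt0 x; case: (denq x) => [n|n] //= n0.
by rewrite -[_%:~R]/(n%:R : K) natK_eq0 -lt0n.
Qed.

Fact ratrK_zmod : zmod_morphism (@ratr K).
Proof.
have injZtoQ: @injective rat int intr by apply: intr_inj.
move=> x y.
apply: (canLR (mulfK (nz_den _))); apply: (mulIf (nz_den x)).
rewrite mulrAC mulrBl divfK ?nz_den // mulrAC -!rmorphM.
apply: (mulIf (nz_den y)); rewrite mulrAC mulrBl divfK ?nz_den //.
rewrite -!(rmorphM, rmorphB); congr _%:~R; apply: injZtoQ.
rewrite !(rmorphM, rmorphB) /= [_ - _]lock /= -lock !numqE.
by rewrite (mulrAC y) -!mulrBl -mulrA mulrAC !mulrA.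
Qed.

Fact ratrK_monoid : monoid_morphism (@ratr K).
Proof.
have injZtoQ: @injective rat int intr by apply: intr_inj.
split=> [|x y]; first by rewrite /ratr divr1.
rewrite /ratr mulrC mulrAC; apply: canLR (mulKf (nz_den _)) _; rewrite !mulrA.
do 2!apply: canRL (mulfK (nz_den _)) _; rewrite -!rmorphM; congr _%:~R.
apply: injZtoQ; rewrite !rmorphM [x * y]lock /= !numqE -lock.
by rewrite -!mulrA mulrA mulrCA -!mulrA (mulrCA y).
Qed.

Definition ratK : rat -> K := @ratr K.
HB.instance Definition _ := GRing.isZmodMorphism.Build rat K ratK ratrK_zmod.
HB.instance Definition _ := GRing.isMonoidMorphism.Build rat K ratK ratrK_monoid.

Definition q0 : K := (N - 1)%:R.
Definition ev (p : {poly rat}) : K := (map_poly ratK p).[q0].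

Lemma evM p q : ev (p * q) = ev p * ev q.
Proof. by rewrite /ev rmorphM hornerM. Qed.
Lemma evD p q : ev (p + q) = ev p + ev q.
Proof. by rewrite /ev rmorphD hornerD. Qed.
Lemma evB p q : ev (p - q) = ev p - ev q.
Proof. by rewrite /ev rmorphB hornerD hornerN. Qed.
Lemma evZ c p : ev (c *: p) = ratK c * ev p.
Proof. by rewrite /ev map_polyZ hornerZ. Qed.
Lemma ev1 : ev 1 = 1.
Proof. by rewrite /ev rmorph1 hornerC. Qed.
Lemma ev_nat n : ev n%:R = n%:R.
Proof. by rewrite /ev rmorph_nat -polyC_natr hornerC. Qed.
Lemma evX : ev 'X = q0.
Proof. by rewrite /ev map_polyX hornerX. Qed.
Lemma ev_sum n (F : 'I_n -> {poly rat}) : ev (\sum_(i < n) F i) = \sum_(i < n) ev (F i).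
Proof. by rewrite /ev rmorph_sum horner_sum. Qed.
Lemma ratK_nat n : ratK n%:R = n%:R.
Proof. exact: rmorph_nat. Qed.
Lemma ratK_inv_nat n : ratK (n%:R^-1) = (n%:R)^-1.
Proof. by rewrite fmorphV rmorph_nat. Qed.

Lemma cvalE i : cval K N i = ev (cpoly i).
Proof. by []. Qed.

Definition pv m := ev (poch1 m).

Lemma pv0 : pv 0 = 1.
Proof. by rewrite /pv /poch1 big_ord0 ev1. Qed.

Lemma pvS m : pv m.+1 = pv m * (1 + m * (N - 1))%:R.
Proof.
rewrite /pv /poch1 big_ord_recr /= evM evD evZ evX ev1 ratK_nat.
by rewrite /q0 natrD natrM.
Qed.

Lemma pv1 : pv 1 = 1.
Proof. by rewrite pvS pv0 mul0n addn0 mul1r. Qed.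

Lemma size_cseq n : size (cseq n) = n.
Proof. by elim: n => //= n IH; rewrite size_rcons IH. Qed.

Lemma nth_cseq n i : (i < n)%N -> nth 0 (cseq n) i = cpoly i.
Proof.
elim: n => // n IH; rewrite ltnS leq_eqVlt => /orP [/eqP -> | lt].
  by [].
by rewrite /= nth_rcons size_cseq lt IH.
Qed.

Lemma cpolyE n : cpoly n = cnext (cseq n).
Proof. by rewrite /cpoly /= nth_rcons size_cseq ltnn eqxx. Qed.

Lemma fact_nz n : (n`!%:R : K) != 0.
Proof. by rewrite natK_eq0 -lt0n fact_gt0. Qed.

Lemma cvalS n : cval K N n = n`!%:R * ((n == 0%N)%:R -
   \sum_(i < n) ((n.+1 - i)`!%:R^-1 * (i`!%:R^-1)) * pv (n.+1 - i) * cval K N i).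
Proof.
rewrite cvalE cpolyE /cnext size_cseq evZ ratK_nat evB ev_nat ev_sum.
congr (_ * (_ - _)); apply: eq_bigr => i _.
by rewrite evZ evM nth_cseq // rmorphM /= !ratK_inv_nat mulrA.
Qed.

Lemma binK m i : (i <= m)%N -> ('C(m, i)%:R : K) = m`!%:R * ((m - i)`!%:R^-1 * (i`!%:R^-1)).
Proof.
move=> le; rewrite -(bin_fact le) !natrM.
by field; rewrite !fact_nz.
Qed.

Lemma cval_rec n : \sum_(i < n.+1) 'C(n.+1, i)%:R * cval K N i * pv (n.+1 - i) = (n == 0%N)%:R.
Proof.
rewrite big_ord_recr /= binSn subSnn pv1 mulr1.
rewrite [cval K N n]cvalS.
have -> : \sum_(i < n) 'C(n.+1, i)%:R * cval K N i * pv (n.+1 - i) =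
  n.+1`!%:R * \sum_(i < n) ((n.+1 - i)`!%:R^-1 * (i`!%:R^-1)) * pv (n.+1 - i) * cval K N i.
  rewrite mulr_sumr; apply: eq_bigr => i _.
  rewrite binK; last by apply: leqW; rewrite ltnW.
  by ring.
rewrite factS natrM.
set S := \sum_(i < n) _.
have -> : forall a b c S : K, a * b * S + a * (b * (c - S)) = a * b * c by move=> *; ring.
by case: n {S} => [|n]; [rewrite fact0 mulr1 mul1r | rewrite mulr0].
Qed.


Definition dlt (r : {poly K}) : {poly K} := 'X^N * r^`().

Lemma coef_Ly (p : PBW K) t :
  (Ly N p)`_t = (if t == 0%N then 0 else p`_t.-1) + dlt (p`_t).
Proof. by rewrite /Ly coefD coefMX coef_map_id0 // deriv0 mulr0. Qed.

Lemma dltMn r n : dlt (r *+ n) = dlt r *+ n.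
Proof. by rewrite /dlt derivMn mulrnAr. Qed.

Lemma dlt0 : dlt 0 = 0.
Proof. by rewrite /dlt deriv0 mulr0. Qed.

Lemma coef_iterLy (q : {poly K}) b t :
  (iter b (Ly N) q%:P)`_t = iter (b - t) dlt q *+ 'C(b, t).
Proof.
elim: b t => [|b IH] t.
  by rewrite /= coefC; case: t.
rewrite iterS coef_Ly; case: t => [|t] /=.
  by rewrite IH !subn0 !bin0 !mulr1n add0r.
rewrite !IH subSS binS mulrnDr addrC dltMn.
case: (ltnP t b) => tb.
  by rewrite -iterS subnSK.
by rewrite bin_small ?ltnS // !mulr0n dlt0 add0r.
Qed.

Lemma coef_Amul (p q : PBW K) t :
  (Amul N p q)`_t = \sum_(k < size p) p`_k * (iter k (Ly N) q)`_t.
Proof. by rewrite /Amul coef_sum; apply: eq_bigr => k _; rewrite coefCM. Qed.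

Lemma sum_coef_ext (R : nzRingType) (p : {poly R}) (G : nat -> R) n :
  (size p <= n)%N ->
  \sum_(k < size p) p`_k * G k = \sum_(k < n) p`_k * G k.
Proof.
move=> le; rewrite -(subnKC le) big_split_ord /= [X in _ + X]big1 ?addr0 // => k _.
by rewrite nth_default ?mul0r // leq_addr.
Qed.

Lemma sum_ind (R : nzRingType) (F : nat -> R) n t :
  \sum_(k < n) F k * (k == t :> nat)%:R = if (t < n)%N then F t else 0.
Proof.
elim: n => [|n IH]; first by rewrite big_ord0.
rewrite big_ord_recr /= IH ltnS.
by case: (ltngtP t n); rewrite ?mulr0 ?addr0 ?mulr1 ?add0r // => ->.
Qed.

Lemma Amul_ax (P : PBW K) : Amul N (ax K) P = 'X%:P * P.
Proof.
by rewrite /Amul /ax /mono expr1 expr0 mulr1 size_polyC polyX_eq0 /= big_ord1 coefC.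
Qed.

Definition Cterm k t : {poly K} :=
  if (t < k)%N then iter (k - t) dlt 'X *+ 'C(k, t) else 0.

Lemma coef_Cm (P : PBW K) n t : (size P <= n)%N ->
  (Amul N P (ax K) - Amul N (ax K) P)`_t = \sum_(k < n) P`_k * Cterm k t.
Proof.
move=> le; rewrite coefB coef_Amul Amul_ax coefCM (sum_coef_ext (fun k => (iter k (Ly N) (ax K))`_t) le).
have E k : (iter k (Ly N) (ax K))`_t = Cterm k t + 'X * (k == t)%:R.
  rewrite /ax /mono expr1 expr0 mulr1.
  rewrite coef_iterLy /Cterm; case: (ltngtP t k) => [tk|kt|->]; rewrite ?mulr0 ?addr0 ?add0r //.
  - by rewrite bin_small.
  - by rewrite subnn binn mulr1.
under eq_bigr do rewrite E mulrDr mulrA.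
rewrite big_split /= (sum_ind (fun k => P`_k * 'X)).
case: ltnP => tn; first by rewrite mulrC addrK.
by rewrite nth_default ?mulr0 ?subr0 ?addr0 // (leq_trans le tn).
Qed.


Hypothesis HN : (1 <= N)%N.

Lemma dltX : dlt 'X = 'X^N.
Proof. by rewrite /dlt derivX mulr1. Qed.

Lemma iter_dlt m : iter m dlt 'X = pv m *: 'X^(1 + m * (N - 1)).
Proof.
elim: m => [|m IH]; first by rewrite /= pv0 scale1r mul0n addn0 expr1.
rewrite iterS IH /dlt derivZ derivXn /= -scalerAr mulrnAr -exprD pvS.
rewrite mulr_natr -scalerMnl -scalerMnr; congr ((_ *: 'X^_) *+ _).
rewrite mulSn; lia.
Qed.

Lemma coef_scmono (c : K) a b k :
  (sc c (mono K a b))`_k = (c *: 'X^a) *+ (k == b)%N.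
Proof. by rewrite /sc /mono coefCM coefCM coefXn mulr_natr mulrnAr mul_polyC. Qed.

Lemma coef_Phi j k : (Phi K N j)`_k =
  \sum_(i < j) ((j%:R^-1 * ('C(j, i)%:R * cval K N i)) *: 'X^(i * (N - 1))) *+ (k == j - i)%N.
Proof.
rewrite /Phi /sc coefCM coef_sum mulr_sumr; apply: eq_bigr => i _.
rewrite -/(sc _ _) coef_scmono mul_polyC -scalerMnr scalerA //.
Qed.

Lemma size_Phi j : (size (Phi K N j) <= j.+1)%N.
Proof.
apply/leq_sizeP => k kj; rewrite coef_Phi big1 // => i _.
case: eqP => [E|]; last by rewrite mulr0n.
by move: kj; rewrite E ltnNge leq_subr.
Qed.

Lemma Amul_sub (P Q R : PBW K) : Amul N (P - Q) R = Amul N P R - Amul N Q R.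
Proof.
apply/polyP => t; rewrite coefB !coef_Amul.
set G := fun k => (iter k (Ly N) R)`_t.
have h1 : (size P <= maxn (size P) (size Q))%N by rewrite leq_maxl.
have h2 : (size Q <= maxn (size P) (size Q))%N by rewrite leq_maxr.
have h3 : (size (P - Q)%R <= maxn (size P) (size Q))%N by rewrite (leq_trans (size_polyD _ _)) // size_polyN.
rewrite (sum_coef_ext G h1) (sum_coef_ext G h2) (sum_coef_ext G h3).
rewrite -sumrB; apply: eq_bigr => k _; by rewrite coefB mulrBl.
Qed.

Lemma Ly_Xn m : Ly N ('X^m : PBW K) = 'X^(m.+1).
Proof.
apply/polyP => t; rewrite coef_Ly !coefXn.
have -> : dlt (t == m)%:R = 0 by rewrite /dlt -polyC_natr derivC mulr0.
by case: t => [|t] /=; rewrite addr0 // eqSS.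
Qed.

Lemma ayX : ay K = 'X.
Proof. by rewrite /ay /mono expr0 polyC1 mul1r expr1. Qed.

Lemma Amul_ay (a : PBW K) : Amul N a (ay K) = a * 'X.
Proof.
rewrite /Amul ayX.
have E k : iter k (Ly N) ('X : PBW K) = 'X^(k.+1).
  elim: k => [|k IH]; first by rewrite expr1.
  by rewrite iterS IH Ly_Xn.
under eq_bigr do rewrite E exprSr mulrA.
rewrite -mulr_suml; congr (_ * _).
transitivity (\poly_(i < size a) a`_i); last exact: coefK.
by rewrite poly_def; apply: eq_bigr => i _; rewrite mul_polyC.
Qed.

Lemma inAy0 (P : PBW K) : inAy N P -> P`_0 = 0.
Proof. by case=> a ->; rewrite Amul_ay coefMX. Qed.

Lemma natK_neq0 n : (0 < n)%N -> (n%:R : K) != 0.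
Proof. by rewrite natK_eq0 -lt0n. Qed.

Lemma cval0 : cval K N 0 = 1.
Proof. by rewrite cvalS big_ord0 subr0 fact0 mulr1. Qed.

Lemma inAy_Phi j : inAy N (Phi K N j).
Proof.
exists (sc (j%:R^-1) (\sum_(i < j) sc ('C(j, i)%:R * cval K N i)
          (mono K (i * (N - 1)) (j - i - 1)))).
rewrite Amul_ay /Phi /sc -mulrA mulr_suml; congr (_ * _); apply: eq_bigr => i _.
rewrite /mono -!mulrA -exprSr (_ : ((j - i - 1).+1 = j - i)%N) //; have := ltn_ord i; lia.
Qed.

Lemma homog_Phi j : homog N (j * (N - 1)) (Phi K N j).
Proof.
move=> i k nz; apply/eqP; move: nz; apply: contraR => ne; apply/eqP.
rewrite coef_Phi coef_sum big1 // => i' _.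
case: (eqVneq k (j - i')%N) => [E|_] /=; last by rewrite mulr0n coef0.
rewrite mulr1n coefZ coefXn.
case: (eqVneq i (i' * (N - 1))%N) => [Ei|_] /=; last by rewrite mulr0.
case/negP: ne; rewrite E Ei -mulnDl subnKC //; exact: ltnW.
Qed.

Lemma bin_prod j n i t : (i <= n)%N -> (n <= j)%N -> t = (j - n)%N ->
  ('C(j, i)%:R * 'C(j - i, t)%:R : K) = 'C(j, n)%:R * 'C(n, i)%:R.
Proof.
move=> inn nj ->.
have e1 : (j - i - (j - n) = n - i)%N by lia.
rewrite (binK (leq_trans inn nj)) (binK (leq_sub2l _ inn)) e1 (binK nj) (binK inn).

by field; rewrite !fact_nz.
Qed.

Lemma sum_ind2 (R : nzRingType) (c : R) (G : nat -> R) n b :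
  \sum_(k < n) (c *+ (k == b :> nat)) * G k = if (b < n)%N then c * G b else 0.
Proof.
rewrite -(sum_ind (fun k => c * G k)); apply: eq_bigr => k _.
by rewrite mulrnAl mulr_natr.
Qed.

Lemma Cm_Phi j : (1 <= j)%N ->
  Amul N (Phi K N j) (ax K) - Amul N (ax K) (Phi K N j) = mono K N (j - 1).
Proof.
move=> j1; apply/polyP => t; rewrite (coef_Cm t (size_Phi j)).
under eq_bigr do rewrite coef_Phi mulr_suml.
rewrite exchange_big /=.
under eq_bigr => i _.
  rewrite (sum_ind2 _ (fun k => Cterm k t)) ltnS leq_subr.
  over.
rewrite /mono coefCM coefXn /=.
case: (ltnP t j) => tj; last first.
  rewrite big1; last by move=> i _; rewrite /Cterm ltnNge (leq_trans (leq_subr _ _) tj) mulr0.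
  by rewrite (_ : (t == j - 1)%N = false) ?mulr0 //; apply: negbTE; apply/eqP; lia.
set n := (j - t)%N.
have n1 : (1 <= n)%N by rewrite /n subn_gt0.
have nj : (n <= j)%N by rewrite /n leq_subr.
rewrite (bigID (fun i : 'I_j => (i < n)%N)) /= [X in _ + X]big1 ?addr0; last first.
  move=> i ni; rewrite /Cterm (_ : (t < j - i)%N = false) ?mulr0 //; apply: negbTE; lia.
rewrite -(big_ord_widen j (fun i => (j%:R^-1 * ('C(j, i)%:R * cval K N i)) *: 'X^(i * (N - 1)) * Cterm (j - i) t) nj).
under eq_bigr => i _.
  have ilt := ltn_ord i.
  rewrite /Cterm (_ : (t < j - i)%N); last by lia.
  rewrite (_ : (j - i - t = n - i)%N); last by lia.
  rewrite iter_dlt mulrnAr -scalerAl -scalerAr scalerA -exprD.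
  rewrite (_ : (i * (N - 1) + (1 + (n - i) * (N - 1)) = 1 + n * (N - 1))%N); last first.
    rewrite addnCA -mulnDl subnKC //; exact: ltnW.
  rewrite scalerMnl -mulr_natr.
  have E := bin_prod (ltnW ilt) nj (_ : t = (j - n)%N).
  rewrite (_ : j%:R^-1 * ('C(j, i)%:R * cval K N i) * pv (n - i) * 'C(j - i, t)%:R =
            (j%:R^-1 * 'C(j, n)%:R) * ('C(n, i)%:R * cval K N i * pv (n - i))); last first.
    transitivity (j%:R^-1 * ('C(j, i)%:R * 'C(j - i, t)%:R) * (cval K N i * pv (n - i))); first by ring.
    rewrite E; last by rewrite /n; lia.
    by ring.
  rewrite -scalerA.
  over.
rewrite -scaler_sumr -scaler_suml.
have [n' nE] : exists n', n = n'.+1 by exists n.-1; rewrite prednK.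
rewrite nE cval_rec.
case: n' nE => [|n'] nE.
  have -> : t = (j - 1)%N by move: nE; rewrite /n; lia.
  rewrite !eqxx /= !mulr1n mulr1 bin1 mulVf ?natK_neq0 // !scale1r.
  by rewrite (_ : (1 + 1 * (N - 1) = N)%N) //; lia.
rewrite scale0r scaler0 (_ : (t == j - 1)%N = false) ?mulr0 //; apply: negbTE; apply/eqP.
move: nE; rewrite /n; lia.
Qed.

Lemma Cm_sub (P Q : PBW K) :
  Amul N (P - Q) (ax K) - Amul N (ax K) (P - Q) =
  (Amul N P (ax K) - Amul N (ax K) P) - (Amul N Q (ax K) - Amul N (ax K) Q).
Proof. rewrite Amul_sub !Amul_ax mulrBr; ring. Qed.

Lemma Cm0_size (D : PBW K) :
  Amul N D (ax K) - Amul N (ax K) D = 0 -> (size D <= 1)%N.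
Proof.
move=> H; case E: (size D) => [|[|m]] //.
have := congr1 (fun p : PBW K => p`_m) H.
rewrite /= coef0 (coef_Cm m (_ : size D <= m.+2)%N) ?E //.
rewrite big_ord_recr /= big1 => [|k _]; last first.
  by rewrite /Cterm (_ : (m < k)%N = false) ?mulr0 //; apply: negbTE; rewrite -leqNgt leq_ord.
rewrite add0r /Cterm ltnSn subSnn binSn /= dltX.
move/eqP; rewrite -mulr_natr mulf_eq0 => /orP [].
  have : lead_coef D != 0 by rewrite lead_coef_eq0 -size_poly_eq0 E.
  by rewrite lead_coefE E /= => /negPf ->.
rewrite mulf_eq0 => /orP [].
  by rewrite (negPf (monic_neq0 (monicXn _ _))).
by rewrite -polyC_natr polyC_eq0 natK_eq0.
Qed.

Lemma Phi1 : Phi K N 1 = ay K.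
Proof.
rewrite /Phi big_ord1 cval0 bin0 mulr1 mul0n subn0 /sc /ay.
by rewrite invr1 polyC1 !mul1r.
Qed.

Lemma cval1 : cval K N 1 = - (N%:R / 2%:R).
Proof.
have := cval_rec 1; rewrite big_ord_recr big_ord1 /= cval0 pv1 subn0 pvS pv1.
rewrite bin0 binSn mul1n (_ : (1 + (N - 1))%N = N); last by lia.
move=> h; have h2 : (2%:R : K) != 0 by rewrite natK_eq0.
rewrite -[cval K N 1](mulKf h2).
have -> : 2%:R * cval K N 1 = - N%:R.
  rewrite mulr0n in h; rewrite -[RHS]addr0 -h; ring.
by field.
Qed.

Lemma part3 j : (2 <= j)%N ->
  (size (Phi K N j - (sc (j%:R^-1) (mono K 0 j)
                      - sc (N%:R / 2%:R) (mono K (N - 1) (j - 1))))%R <= j.-1)%N.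
Proof.
move=> j2; apply/leq_sizeP => k kj.
rewrite !coefB coef_Phi !coef_scmono.
have [j' jE] : exists j', j = j'.+2 by exists j.-2; lia.
rewrite jE in kj *.
rewrite big_ord_recl big_ord_recl big1 => [|i _]; last first.
  rewrite (_ : (k == _)%N = false) ?mulr0n //; apply: negbTE; apply/eqP.
  move: kj; rewrite /= /bump /=; lia.
rewrite addr0 /= cval0 cval1 bin0 bin1 mul0n mul1n subn0 !mulr1.
rewrite /bump /= mulrA mulVf ?natK_neq0 // mul1r scaleNr mulNrn.
ring.
Qed.

Lemma main j : (1 <= j)%N ->
  (forall P : PBW K,
     [/\ inAy N P, homog N (j * (N - 1)) P &
         Amul N P (ax K) - Amul N (ax K) P = mono K N (j - 1)]
     <-> P = Phi K N j)
  /\ (j = 1%N -> Phi K N j = ay K)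
  /\ ((2 <= j)%N ->
      inF (j%:Z - 2)
        (Phi K N j - (sc (j%:R^-1) (mono K 0 j)
                      - sc (N%:R / 2%:R) (mono K (N - 1) (j - 1))))).
Proof.
move=> j1; split; [move=> P; split | split].
- case=> hA _ hC.
  have H0 : Amul N (P - Phi K N j) (ax K) - Amul N (ax K) (P - Phi K N j) = 0.
    by rewrite Cm_sub hC Cm_Phi // subrr.
  move/size1_polyC: (Cm0_size H0).
  rewrite coefB (inAy0 hA) (inAy0 (inAy_Phi j)) subrr => /eqP.
  by rewrite subr_eq0 => /eqP.
- by move=> ->; split; [exact: inAy_Phi | exact: homog_Phi | exact: Cm_Phi].
- by move=> ->; exact: Phi1.
- move=> j2; rewrite /inF; have := part3 j2; lia.
Qed.

End W.

Unset Implicit Arguments.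

Theorem lemma4p1 (K : fieldType) (HK : [pchar K] =i pred0) (N : nat)
  (HN : (1 <= N)%N) (j : nat) (Hj : (1 <= j)%N) :
  (forall P : PBW K,
     [/\ inAy N P, homog N (j * (N - 1)) P &
         Amul N P (ax K) - Amul N (ax K) P = mono K N (j - 1)]
     <-> P = Phi K N j)
  /\ (j = 1%N -> Phi K N j = ay K)
  /\ ((2 <= j)%N ->
      inF (j%:Z - 2)
        (Phi K N j - (sc (j%:R^-1) (mono K 0 j)
                      - sc (N%:R / 2%:R) (mono K (N - 1) (j - 1))))).
Proof. exact: (main HK HN Hj). Qed.
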